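(* Let $G$ be a finite simple graph of order $p$, and let $\mathbb{F}$ be a field with $\operatorname{char}\mathbb{F}\neq 2$ such that either $\operatorname{char}\mathbb{F}=0$ or $p<2+\operatorname{char}\mathbb{F}$. Then a linear functional $\lambda$ on $U_G$ is a short functional if and only if there exist an edge $[a,b]$ of $G$ and a nonzero scalar $\alpha\in\mathbb{F}$ such that $\lambda(a)=\lambda(b)=\alpha$ and $\lambda(c)=0$ for every vertex $c\notin\{a,b\}$.
   Context: $G$ has vertex set $VG$ and edge set $EG$; the edge with endpoints $x,y$ is written $[x,y]$, and $x\sim y$ means $x,y$ are adjacent. $U_G$ denotes the $\mathbb{F}$-vector space with basis $VG$ (formal linear combinations of vertices). A short functional is a nonzero linear functional $\lambda$ on $U_G$ satisfying: (1) if $x\neq y$ are nonadjacent vertices, then $\lambda(x)=0$ or $\lambda(y)=0$; (2) if $\lambda(x)\neq 0$, then $\lambda(x)=\sum_{t\sim x}\lambda(t)$, the sum over the vertices $t$ adjacent to $x$. (These are exactly the functionals $\lambda$ for which, with $\mu([x,y])=\lambda(x)\lambda(y)$ on edges, the map $u+\mathfrak{z}\mapsto\lambda(u)r+\mu(\mathfrak{z})\mathfrak{s}$ is a homomorphism of the normal graph algebra of $G$ into the algebra with basis $r,\mathfrak{s}$ and sole nonzero product $r^2=\mathfrak{s}$.) *)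

(* Defs.v *)
From mathcomp Require Import all_boot all_order all_algebra.
Set Implicit Arguments. Unset Strict Implicit. Unset Printing Implicit Defensive.
Import GRing.Theory.
Local Open Scope ring_scope.

(* A linear functional on U_G (the F-vector space
   with basis V) is determined by, and identified with, its values on the
   basis, i.e. a function lam : V -> F. *)

Definition simple_graph (V : finType) (e : rel V) : Prop :=
  symmetric e /\ irreflexive e.

Definition short_functional (F : fieldType) (V : finType) (e : rel V)
    (lam : V -> F) : Prop :=
  [/\ (exists x, lam x != 0),
      (forall x y, x != y -> ~~ e x y -> lam x = 0 \/ lam y = 0) &
      (forall x, lam x != 0 -> lam x = \sum_(t | e x t) lam t)].

(* Main.v *)
Require Import Defs.
From mathcomp Require Import all_boot all_order all_algebra.
Local Open Scope ring_scope.
Import GRing.Theory.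

Lemma two_eq (F : fieldType) (N k : nat)
    (Hchar : (forall q : nat, q \notin [pchar F]) \/
             (exists q : nat, q \in [pchar F] /\ (N < 2 + q)%N))
    (hk : (k <= N)%N) (hk0 : (0 < k)%N) (hkr : k%:R = 2%:R :> F) : k = 2%N.
Proof.
case: k hk hk0 hkr => [//|[|k]] hk _ hkr.
  have : (2%:R - 1%:R : F) = 0 by rewrite -hkr subrr.
  by rewrite -natrB // subn1 /= => /eqP; rewrite oner_eq0.
have h0 : (k%:R : F) = 0.
  by have := congr1 (fun x => x - 2%:R) hkr; rewrite subrr -natrB //= subn2.
case: k hk hkr h0 => [//|k] hk _ h0.
exfalso; case: Hchar => [H|[q [Hq HN]]].
  have [p hp] := natf0_pchar (isT : (0 < k.+1)%N) (introT eqP h0).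
  by move: (H p); rewrite hp.
have : (q %| k.+1)%N by rewrite (dvdn_pcharf Hq) h0.
move/dvdn_leq => /(_ isT) => hq.
have := leq_ltn_trans hk HN.
by rewrite add2n !ltnS ltnNge hq.
Qed.

Theorem theorem4p1 (V : finType) (e : rel V) (HG : simple_graph e)
    (F : fieldType)
    (Hchar2 : (2 \notin [pchar F])%N)
    (Hchar : (forall q : nat, q \notin [pchar F]) \/
             (exists q : nat, q \in [pchar F] /\ (#|V| < 2 + q)%N))
    (lam : V -> F) :
  short_functional e lam <->
  exists (a b : V) (alpha : F),
    [/\ e a b, alpha != 0, lam a = alpha, lam b = alpha &
        forall c : V, c != a -> c != b -> lam c = 0].
Proof.
have [esym eirr] := HG.
have two0 : (2%:R : F) != 0.
  apply/negP => h; move/negP: Hchar2; apply; by rewrite inE /= h.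
split.
- case=> [[x0 hx0] H1 H2].
  set T := \sum_t lam t.
  have key : forall x, lam x != 0 -> lam x = T / 2%:R.
    move=> x hx.
    have E : \sum_(t | e x t) lam t = \sum_(t | t != x) lam t.
      rewrite big_mkcond [RHS]big_mkcond; apply: eq_bigr => t _.
      case: (eqVneq t x) => [->|htx]; first by rewrite eirr.
      case ext: (e x t) => //.
      case: (H1 x t); [by rewrite eq_sym | by rewrite ext | | by move=> ->].
      by move=> h; rewrite h eqxx in hx.
    have := H2 x hx; rewrite E.
    have -> : \sum_(t | t != x) lam t = T - lam x.
      by rewrite /T [in RHS](bigD1 x) //= [lam x + _]addrC addrK.
    move=> h; apply: (canRL (mulfK two0)).
    by rewrite mulr_natr mulr2n {2}h addrC subrK.
  set alpha := T / 2%:R.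
  have ha : alpha != 0 by rewrite /alpha -(key x0 hx0).
  set S := [set x | lam x != 0].
  have TS : T = alpha *+ #|S|.
    rewrite /T (bigID (fun t => t \in S)) /= [X in _ + X]big1 ?addr0; last first.
      by move=> t; rewrite inE negbK => /eqP.
    rewrite (eq_bigr (fun _ => alpha)); first by rewrite sumr_const.
    by move=> t; rewrite inE => /key.
  have TS2 : T = alpha *+ 2 by rewrite /alpha -mulr_natr mulfVK.
  have k2 : #|S| = 2%N.
    apply: (@two_eq F #|V| #|S| Hchar); first exact: max_card.
      by apply/card_gt0P; exists x0; rewrite inE.
    apply: (mulIf ha); rewrite !mulr_natl -TS -TS2 //.
  have [a [b [hab hS]]] : exists a b, a != b /\ S = [set a; b].
    by apply/cards2P; rewrite k2.
  have la : lam a != 0.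
    have : a \in S by rewrite hS !inE eqxx.
    by rewrite /S inE.
  have lb : lam b != 0.
    have : b \in S by rewrite hS !inE eqxx orbT.
    by rewrite /S inE.
  exists a, b, alpha; split => //.
  + apply/negPn/negP => nab.
    by case: (H1 a b hab nab) => /eqP; [rewrite (negPf la) | rewrite (negPf lb)].
  + exact: key.
  + exact: key.
  + move=> c hca hcb; apply/eqP; apply/negPn/negP => hc.
    have : c \in S by rewrite inE.
    by rewrite hS !inE (negPf hca) (negPf hcb).
- case=> [a [b [alpha [hab ha la lb hc]]]].
  have hab' : a != b by apply/eqP => h; rewrite h eirr in hab.
  have supp : forall z, lam z != 0 -> z = a \/ z = b.
    move=> z hz; case: (eqVneq z a) => [->|hza]; first by left.
    case: (eqVneq z b) => [->|hzb]; first by right.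
    by rewrite hc ?eqxx in hz.
  have side : forall x y, e x y -> lam x = alpha -> lam y = alpha ->
      (forall c, c != x -> c != y -> lam c = 0) ->
      lam x = \sum_(t | e x t) lam t.
    move=> x y hxy lx ly hc'.
    rewrite (bigD1 y) //= big1 ?addr0 ?lx ?ly //.
    move=> t /andP [ht htb]; apply: hc' => //.
    by apply/eqP => h; rewrite h eirr in ht.
  split.
  + by exists a; rewrite la.
  + move=> x y hxy nxy.
    case: (eqVneq (lam x) 0) => [|hx]; first by left.
    case: (eqVneq (lam y) 0) => [|hy]; first by right.
    exfalso; move/negP: nxy; apply.
    move: hxy; case: (supp x hx) => ->; case: (supp y hy) => ->;
      by rewrite ?eqxx // esym.
  + move=> x hx; case: (supp x hx) => ->.
      exact: (side a b).
    apply: (side b a) => //; first by rewrite esym.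
    by move=> c h1 h2; apply: hc.
Qed.
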